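(* Let $u$ be a smooth solution of the equivariant Skyrme equation in $\Omega$ with $u(t,0)=0$. Then $u$ is continuous at $(0,0)$, i.e. $\lim_{(t,r)\in\Omega,\,(t,r)\to(0,0)}u(t,r)=0$, and there exist $t_*\in(0,T_0]$ and a constant $C$ depending only on $E(T_0)$ such that \[ |u(t,r)|\le C\,r^{1/2}\quad\text{for all }(t,r)\in\Omega\text{ with }t\le t_*. \]
   Context: Fix $\alpha>0$, $T_0>0$. The equivariant Skyrme equation is \[ w(u_{tt}-u_{rr}) - \Big(1-\tfrac{\alpha^2\sin^2u}{r^2}\Big)\tfrac{u_r}{r} + \tfrac{\sin 2u}{2r^2}\big[\alpha^2(u_t^2-u_r^2)+1\big]=0,\qquad w:=1+\tfrac{\alpha^2\sin^2u}{r^2}. \] $\Omega=\{(t,r):0<t\le T_0,\ 0\le r\le t\}$; a smooth solution in $\Omega$ is a smooth function on $\Omega$ satisfying the equation for $r>0$. Energy density $e:=w\frac{u_t^2+u_r^2}{2}+\frac{\sin^2u}{2r^2}$; energy $E(T):=\int_0^T e(T,r)\,r\,dr$. *)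

(* Defs.v *)
From Stdlib Require Import Reals Lra ClassicalEpsilon.
Open Scope R_scope.

Definition Omega (T0 t r : R) : Prop := 0 < t <= T0 /\ 0 <= r <= t.

Definition open2 (U : R -> R -> Prop) : Prop :=
  forall t r, U t r -> exists d, 0 < d /\
    forall t' r', Rabs (t' - t) < d -> Rabs (r' - r) < d -> U t' r'.

Definition cont_on (U : R -> R -> Prop) (f : R -> R -> R) : Prop :=
  forall t r, U t r -> forall eps, 0 < eps -> exists d, 0 < d /\
    forall t' r', U t' r' -> Rabs (t' - t) < d -> Rabs (r' - r) < d ->
      Rabs (f t' r' - f t r) < eps.

Definition partial_t (f g : R -> R -> R) (t r : R) : Prop :=
  derivable_pt_lim (fun s => f s r) t (g t r).
Definition partial_r (f g : R -> R -> R) (t r : R) : Prop :=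
  derivable_pt_lim (fun s => f t s) r (g t r).

Fixpoint Ck (k : nat) (U : R -> R -> Prop) (f : R -> R -> R) : Prop :=
  match k with
  | O => cont_on U f
  | S m => cont_on U f /\ exists ft fr : R -> R -> R,
      (forall t r, U t r -> partial_t f ft t r /\ partial_r f fr t r) /\
      Ck m U ft /\ Ck m U fr
  end.

Definition Cinf (U : R -> R -> Prop) (f : R -> R -> R) : Prop :=
  forall k, Ck k U f.

Definition wgt (alpha u r : R) : R := 1 + alpha ^ 2 * sin u ^ 2 / r ^ 2.

Definition skyrme_eq (alpha r u ut ur utt urr : R) : Prop :=
  wgt alpha u r * (utt - urr)
  - (1 - alpha ^ 2 * sin u ^ 2 / r ^ 2) * (ur / r)
  + sin (2 * u) / (2 * r ^ 2) * (alpha ^ 2 * (ut ^ 2 - ur ^ 2) + 1) = 0.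

Definition edens (alpha : R) (u ut ur : R -> R -> R) (t r : R) : R :=
  wgt alpha (u t r) r * (ut t r ^ 2 + ur t r ^ 2) / 2
  + sin (u t r) ^ 2 / (2 * r ^ 2).

(* E(T) = int_0^T e(T,r) r dr  (Riemann integral; chosen by classical
   description, it is the integral whenever the integrand is Riemann
   integrable, which is the case for smooth solutions with u(t,0)=0). *)
Definition energy (alpha : R) (u ut ur : R -> R -> R) (T : R) : R :=
  epsilon (inhabits 0)
    (fun E => exists pr : Riemann_integrable
                 (fun r => edens alpha u ut ur T r * r) 0 T,
              RiemannInt pr = E).

(* Main.v *)
Require Import Defs.
From Stdlib Require Import Reals Lra Psatz Classical ClassicalEpsilon.
From Coquelicot Require Import Coquelicot.
Open Scope R_scope.

Lemma c2_of_cont (U : R -> R -> Prop) f t r :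
  open2 U -> cont_on U f -> U t r -> continuity_2d_pt f t r.
Proof.
  intros HU Hf Htr eps.
  destruct (HU t r Htr) as [d0 [Hd0 Hd0']].
  destruct (Hf t r Htr eps (cond_pos eps)) as [d1 [Hd1 Hd1']].
  assert (Hm : 0 < Rmin d0 d1) by (apply Rmin_pos; lra).
  exists (mkposreal _ Hm); simpl; intros u v Hu Hv.
  assert (Hu0 : Rabs (u - t) < d0) by (eapply Rlt_le_trans; [apply Hu|apply Rmin_l]).
  assert (Hv0 : Rabs (v - r) < d0) by (eapply Rlt_le_trans; [apply Hv|apply Rmin_l]).
  apply Hd1'; auto.
  eapply Rlt_le_trans; [apply Hu|apply Rmin_r].
  eapply Rlt_le_trans; [apply Hv|apply Rmin_r].
Qed.

Lemma c2_comp1 (h : R -> R) f x y :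
  continuity_pt h (f x y) -> continuity_2d_pt f x y ->
  continuity_2d_pt (fun a b => h (f a b)) x y.
Proof.
  intros Hh Hf eps.
  destruct (Hh eps (cond_pos eps)) as [d [Hd Hd']].
  destruct (Hf (mkposreal d Hd)) as [d2 Hd2].
  exists d2; intros u v Hu Hv.
  specialize (Hd2 u v Hu Hv). simpl in Hd2.
  destruct (Req_dec (f u v) (f x y)) as [E|E].
  - rewrite E, Rminus_eq_0, Rabs_R0; apply cond_pos.
  - apply (Hd' (f u v)). split. split; [exact I| auto]. exact Hd2.
Qed.

Lemma c2_r (f : R -> R -> R) x y :
  continuity_2d_pt f x y -> continuity_pt (fun r => f x r) y.
Proof.
  intros Hf eps Heps.
  destruct (Hf (mkposreal eps Heps)) as [d Hd].
  exists d; split; [apply cond_pos|].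
  intros z [_ Hz]. simpl in *. unfold R_dist in *.
  apply Hd; auto. rewrite Rminus_eq_0, Rabs_R0; apply cond_pos.
Qed.

Lemma c2_t (f : R -> R -> R) x y :
  continuity_2d_pt f x y -> continuity_pt (fun t => f t y) x.
Proof.
  intros Hf eps Heps.
  destruct (Hf (mkposreal eps Heps)) as [d Hd].
  exists d; split; [apply cond_pos|].
  intros z [_ Hz]. simpl in *. unfold R_dist in *.
  apply Hd; auto. rewrite Rminus_eq_0, Rabs_R0; apply cond_pos.
Qed.

Lemma lip_bound (g dg : R -> R) a b M :
  a <= b ->
  (forall x, a <= x <= b -> is_derive g x (dg x)) ->
  (forall x, a <= x <= b -> Rabs (dg x) <= M) ->
  Rabs (g b - g a) <= M * (b - a).
Proof.
  intros Hab Hd HM.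
  destruct (MVT_gen g a b dg) as [c [Hc Heq]].
  - intros x Hx. apply Hd. rewrite Rmin_left, Rmax_right in Hx; lra.
  - intros x Hx. rewrite Rmin_left, Rmax_right in Hx by lra.
    apply continuity_pt_filterlim. apply (ex_derive_continuous (K:=R_AbsRing) (V:=R_NormedModule) g x).
    eexists; apply Hd; auto.
  - rewrite Rmin_left, Rmax_right in Hc by lra.
    rewrite Heq, Rabs_mult, (Rabs_right (b - a)) by lra.
    apply Rmult_le_compat_r; [lra| apply HM; auto].
Qed.

Fixpoint lmax (g : R -> R -> R) (l : list (Compactness.Tn 2 R)) : R :=
  match l with
  | nil => 0
  | cons p l' => Rmax (lmax g l') (Rabs (g (fst p) (fst (snd p))) + 1)
  end.

Lemma lmax_in g l p : List.In p l -> Rabs (g (fst p) (fst (snd p))) + 1 <= lmax g l.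
Proof.
  induction l as [|q l IH]; simpl; [tauto|].
  intros [->|H]. apply Rmax_r. eapply Rle_trans; [apply IH; auto| apply Rmax_l].
Qed.

Lemma bounded2d (g : R -> R -> R) a b c d :
  (forall x y, a <= x <= b -> c <= y <= d -> continuity_2d_pt g x y) ->
  exists M, forall x y, a <= x <= b -> c <= y <= d -> Rabs (g x y) <= M.
Proof.
  intros Hc.
  set (P := fun (p : Compactness.Tn 2 R) (e : posreal) =>
        bounded_n 2 (a,(c,tt)) (b,(d,tt)) p ->
        forall x y, Rabs (x - fst p) < e -> Rabs (y - fst (snd p)) < e ->
          Rabs (g x y - g (fst p) (fst (snd p))) < 1).
  assert (HP : forall p, exists e, P p e).
  { intros [x [y []]]. unfold P. simpl.
    destruct (classic (a <= x <= b /\ c <= y <= d)) as [H|H].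
    - destruct H as [Hx Hy]. destruct (Hc x y Hx Hy (mkposreal 1 Rlt_0_1)) as [e He].
      exists e. intros _ u v Hu Hv. apply He; auto.
    - exists (mkposreal 1 Rlt_0_1). intros H'. exfalso; apply H; tauto. }
  set (delta := fun p => epsilon (inhabits (mkposreal 1 Rlt_0_1)) (P p)).
  assert (Hdelta : forall p, P p (delta p)).
  { intros p. unfold delta. apply epsilon_spec. apply HP. }
  apply NNPP; intro HN.
  apply (compactness_list 2 (a,(c,tt)) (b,(d,tt)) delta).
  intros [l Hl]. apply HN. exists (lmax g l).
  intros x y Hx Hy.
  destruct (Hl (x,(y,tt))) as [p [Hin [Hb Hcl]]].
  { simpl. tauto. }
  destruct p as [u [v []]]. simpl in Hcl.
  pose proof (Hdelta (u,(v,tt)) Hb x y (proj1 Hcl) (proj1 (proj2 Hcl))) as H1.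
  simpl in H1.
  pose proof (lmax_in g l _ Hin) as H2. simpl in H2.
  apply Rle_trans with (Rabs (g u v) + 1); [|exact H2].
  pose proof (Rabs_triang_inv (g x y) (g u v)). lra.
Qed.

Lemma tube (U : R -> R -> Prop) t1 T0 :
  open2 U -> 0 < t1 <= T0 ->
  (forall t r, t1 <= t <= T0 -> 0 <= r <= t -> U t r) ->
  exists eta, 0 < eta /\ forall t r, t1 <= t <= T0 -> 0 <= r <= t ->
    forall t' r', Rabs (t' - t) < eta -> Rabs (r' - r) < eta -> U t' r'.
Proof.
  intros HU Ht HK.
  set (P := fun (x y : R) (e : posreal) =>
        t1 <= x <= T0 -> 0 <= y <= T0 ->
        forall t' r', Rabs (t' - x) < 2 * e -> Rabs (r' - Rmin y x) < 2 * e -> U t' r').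
  assert (HP : forall x y, exists e, P x y e).
  { intros x y. unfold P.
    destruct (classic (t1 <= x <= T0 /\ 0 <= y <= T0)) as [H|H].
    - destruct H as [Hx Hy].
      assert (HUq : U x (Rmin y x)).
      { apply HK; auto. split. apply Rmin_glb; lra. apply Rmin_r. }
      destruct (HU _ _ HUq) as [d0 [Hd0 Hd0']].
      assert (Hp : 0 < d0 / 2) by lra.
      exists (mkposreal _ Hp). simpl. intros _ _ t' r' H1 H2. apply Hd0'; lra.
    - exists (mkposreal 1 Rlt_0_1). intros H1 H2. exfalso; apply H; tauto. }
  set (delta := fun x y => epsilon (inhabits (mkposreal 1 Rlt_0_1)) (P x y)).
  assert (Hdelta : forall x y, P x y (delta x y)).
  { intros x y. unfold delta. apply epsilon_spec. apply HP. }
  destruct (compactness_value_2d t1 T0 0 T0 delta) as [d Hd].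
  exists d. split; [apply cond_pos|].
  intros t r Htt Hr t' r' H1 H2.
  apply NNPP; intro HN.
  apply (Hd t r Htt (conj (proj1 Hr) (Rle_trans _ _ _ (proj2 Hr) (proj2 Htt)))).
  intros [x [y [Hx [Hy [Hxt [Hyr Hdd]]]]]]. apply HN.
  apply (Hdelta x y Hx Hy).
  - apply Rabs_def1; apply Rabs_def2 in H1; apply Rabs_def2 in Hxt; lra.
  - apply Rabs_def2 in H2; apply Rabs_def2 in Hxt; apply Rabs_def2 in Hyr.
    apply Rabs_def1; unfold Rmin; destruct (Rle_dec y x); lra.
Qed.

Lemma locally_of_d (x : R) (P : R -> Prop) :
  (exists d, 0 < d /\ forall y, Rabs (y - x) < d -> P y) -> locally x P.
Proof.
  intros [d [Hd H]]. exists (mkposreal d Hd). intros y Hy. apply H. exact Hy.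
Qed.

Lemma dlim_ext_loc (f g : R -> R) x l :
  (exists d, 0 < d /\ forall y, Rabs (y - x) < d -> f y = g y) ->
  derivable_pt_lim f x l -> derivable_pt_lim g x l.
Proof.
  intros Hd Hf. apply is_derive_Reals. apply is_derive_Reals in Hf.
  eapply is_derive_ext_loc; [|exact Hf]. apply locally_of_d. exact Hd.
Qed.

Lemma cont_on_ext (U : R -> R -> Prop) f g :
  (forall t r, U t r -> f t r = g t r) -> cont_on U f -> cont_on U g.
Proof.
  intros E Hf t r Htr eps Heps.
  destruct (Hf t r Htr eps Heps) as [d [Hd H]]. exists d; split; auto.
  intros t' r' H1 H2 H3. rewrite <- !E by auto. auto.
Qed.

Definition Reg (U : R -> R -> Prop) (u ut ur utt utr urr : R -> R -> R) : Prop :=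
  (forall t r, U t r -> partial_t u ut t r /\ partial_r u ur t r /\
     partial_t ut utt t r /\ partial_r ut utr t r /\
     partial_t ur utr t r /\ partial_r ur urr t r) /\
  cont_on U u /\ cont_on U ut /\ cont_on U ur /\ cont_on U utt /\
  cont_on U utr /\ cont_on U urr.

Lemma reg_of (U : R -> R -> Prop) (u ut ur utt urr : R -> R -> R) :
  open2 U -> Cinf U u ->
  (forall t r, U t r ->
       partial_t u ut t r /\ partial_r u ur t r /\
       partial_t ut utt t r /\ partial_r ur urr t r) ->
  exists utr, Reg U u ut ur utt utr urr.
Proof.
  intros HU Hinf Hp.
  destruct (Hinf 2%nat) as [Hu [ft [fr [Hd [[Hft [ftt [ftr [Hdt [Hftt Hftr]]]]]
                                          [Hfr [frt [frr [Hdr [Hfrt Hfrr]]]]]]]]]].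
  simpl in *.
  assert (Eft : forall t r, U t r -> ft t r = ut t r).
  { intros t r H. eapply uniqueness_limite; [apply (Hd t r H)| apply (Hp t r H)]. }
  assert (Efr : forall t r, U t r -> fr t r = ur t r).
  { intros t r H. eapply uniqueness_limite; [apply (Hd t r H)| apply (Hp t r H)]. }
  assert (Lt : forall f g, (forall t r, U t r -> f t r = g t r) ->
            forall t r l, U t r -> partial_t f l t r -> derivable_pt_lim (fun s => g s r) t (l t r)).
  { intros f g E t r l H Hl. eapply dlim_ext_loc; [|exact Hl].
    destruct (HU t r H) as [d [Hd0 Hd1]]. exists d; split; auto.
    intros y Hy. apply E. apply Hd1; auto. rewrite Rminus_eq_0, Rabs_R0; lra. }
  assert (Lr : forall f g, (forall t r, U t r -> f t r = g t r) ->
            forall t r l, U t r -> partial_r f l t r -> derivable_pt_lim (fun s => g t s) r (l t r)).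
  { intros f g E t r l H Hl. eapply dlim_ext_loc; [|exact Hl].
    destruct (HU t r H) as [d [Hd0 Hd1]]. exists d; split; auto.
    intros y Hy. apply E. apply Hd1; auto. rewrite Rminus_eq_0, Rabs_R0; lra. }
  assert (Ett : forall t r, U t r -> ftt t r = utt t r).
  { intros t r H. eapply uniqueness_limite; [apply (Lt ft ut Eft t r ftt H), Hdt; auto| apply (Hp t r H)]. }
  assert (Err : forall t r, U t r -> frr t r = urr t r).
  { intros t r H. eapply uniqueness_limite; [apply (Lr fr ur Efr t r frr H), Hdr; auto| apply (Hp t r H)]. }
  assert (Esch : forall t r, U t r -> frt t r = ftr t r).
  { intros x y H.
    assert (HD1 : forall a b, U a b -> Derive (fun z => Derive (fun t => u z t) b) a = frt a b).
    { intros a b Hab. apply is_derive_unique.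
      apply is_derive_Reals. eapply dlim_ext_loc; [| apply (Hdr a b Hab)].
      destruct (HU a b Hab) as [d [Hd0 Hd1]]. exists d; split; auto.
      intros z Hz. symmetry. apply is_derive_unique. apply is_derive_Reals.
      assert (Hz' : U z b) by (apply Hd1; auto; rewrite Rminus_eq_0, Rabs_R0; lra).
      rewrite Efr by auto. apply (Hp z b Hz'). }
    assert (HD2 : forall a b, U a b -> Derive (fun z => Derive (fun t => u t z) a) b = ftr a b).
    { intros a b Hab. apply is_derive_unique.
      apply is_derive_Reals. eapply dlim_ext_loc; [| apply (Hdt a b Hab)].
      destruct (HU a b Hab) as [d [Hd0 Hd1]]. exists d; split; auto.
      intros z Hz. symmetry. apply is_derive_unique. apply is_derive_Reals.
      assert (Hz' : U a z) by (apply Hd1; auto; rewrite Rminus_eq_0, Rabs_R0; lra).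
      rewrite Eft by auto. apply (Hp a z Hz'). }
    destruct (HU x y H) as [d [Hd0 Hd1]].
    assert (Hloc : forall a b, Rabs (a - x) < d -> Rabs (b - y) < d -> U a b) by (intros; apply Hd1; auto).
    rewrite <- HD1, <- HD2 by auto.
    apply Schwarz.
    - exists (mkposreal d Hd0). simpl. intros a b Ha Hb.
      assert (Hab : U a b) by auto.
      repeat split.
      + exists (ut a b). apply is_derive_Reals. apply (Hp a b Hab).
      + exists (ur a b). apply is_derive_Reals. apply (Hp a b Hab).
      + exists (frt a b). rewrite <- HD1 by auto. apply Derive_correct.
        exists (frt a b). apply is_derive_Reals. eapply dlim_ext_loc; [| apply (Hdr a b Hab)].
        destruct (HU a b Hab) as [d' [Hd0' Hd1']]. exists d'; split; auto.
        intros z Hz. symmetry. apply is_derive_unique. apply is_derive_Reals.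
        assert (Hz' : U z b) by (apply Hd1'; auto; rewrite Rminus_eq_0, Rabs_R0; lra).
        rewrite Efr by auto. apply (Hp z b Hz').
      + exists (ftr a b). rewrite <- HD2 by auto. apply Derive_correct.
        exists (ftr a b). apply is_derive_Reals. eapply dlim_ext_loc; [| apply (Hdt a b Hab)].
        destruct (HU a b Hab) as [d' [Hd0' Hd1']]. exists d'; split; auto.
        intros z Hz. symmetry. apply is_derive_unique. apply is_derive_Reals.
        assert (Hz' : U a z) by (apply Hd1'; auto; rewrite Rminus_eq_0, Rabs_R0; lra).
        rewrite Eft by auto. apply (Hp a z Hz').
    - apply continuity_2d_pt_ext_loc with frt.
      + exists (mkposreal d Hd0). simpl. intros a b Ha Hb. rewrite HD1; auto.
      + apply c2_of_cont with U; auto.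
    - apply continuity_2d_pt_ext_loc with ftr.
      + exists (mkposreal d Hd0). simpl. intros a b Ha Hb. rewrite HD2; auto.
      + apply c2_of_cont with U; auto. }
  exists ftr. split.
  - intros t r H. repeat split; try apply (Hp t r H).
    + apply (Lr ft ut Eft t r ftr H), Hdt; auto.
    + unfold partial_t. rewrite <- Esch by auto. apply (Lt fr ur Efr t r frt H), Hdr; auto.
  - repeat split; auto.
    + eapply cont_on_ext; [exact Eft| exact Hft].
    + eapply cont_on_ext; [exact Efr| exact Hfr].
    + eapply cont_on_ext; [exact Ett| exact Hftt].
    + eapply cont_on_ext; [exact Err| exact Hfrr].
Qed.
Definition Af alpha u ut ur (t r : R) := edens alpha u ut ur t r * r.
Definition Atf alpha (u ut ur utt utr : R -> R -> R) t r :=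
  (alpha^2 * (2 * sin (u t r) * cos (u t r) * ut t r) / r^2 * (ut t r ^2 + ur t r ^2)
   + wgt alpha (u t r) r * (2 * ut t r * utt t r + 2 * ur t r * utr t r)) / 2 * r
  + sin (u t r) * cos (u t r) * ut t r / r.
Definition Bf alpha (u ut ur : R -> R -> R) t r :=
  wgt alpha (u t r) r * ut t r * ur t r * r.
Definition Brf alpha (u ut ur utr urr : R -> R -> R) t r :=
  (alpha^2 * (2 * sin (u t r) * cos (u t r) * ur t r) / r^2 - 2 * alpha^2 * sin (u t r)^2 / r^3)
    * ut t r * ur t r * r
  + wgt alpha (u t r) r * (utr t r * ur t r + ut t r * urr t r) * r
  + wgt alpha (u t r) r * ut t r * ur t r.

Lemma cons_law alpha u ut ur utt utr urr t r : r <> 0 ->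
  skyrme_eq alpha r (u t r) (ut t r) (ur t r) (utt t r) (urr t r) ->
  Atf alpha u ut ur utt utr t r = Brf alpha u ut ur utr urr t r.
Proof.
  intros Hr H. unfold skyrme_eq in H. rewrite sin_2a in H.
  unfold Atf, Brf, wgt in *.
  apply Rminus_diag_uniq.
  transitivity (ut t r * r * ((1 + alpha ^ 2 * sin (u t r) ^ 2 / r ^ 2) * (utt t r - urr t r) -
      (1 - alpha ^ 2 * sin (u t r) ^ 2 / r ^ 2) * (ur t r / r) +
      2 * sin (u t r) * cos (u t r) / (2 * r ^ 2) *
      (alpha ^ 2 * (ut t r ^ 2 - ur t r ^ 2) + 1))).
  - field. auto.
  - rewrite H. ring.
Qed.

Lemma A_deriv alpha u ut ur utt utr t r :
  r <> 0 ->
  derivable_pt_lim (fun s => u s r) t (ut t r) ->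
  derivable_pt_lim (fun s => ut s r) t (utt t r) ->
  derivable_pt_lim (fun s => ur s r) t (utr t r) ->
  is_derive (fun z => Af alpha u ut ur z r) t (Atf alpha u ut ur utt utr t r).
Proof.
  intros Hr H1 H2 H3. apply is_derive_Reals in H1, H2, H3.
  unfold Af, edens, wgt. auto_derive.
  - repeat split; eexists; eauto.
  - rewrite (is_derive_unique _ _ _ H1), (is_derive_unique _ _ _ H2), (is_derive_unique _ _ _ H3).
    unfold Atf, wgt. field. auto.
Qed.

Lemma B_deriv alpha u ut ur utr urr t r :
  r <> 0 ->
  derivable_pt_lim (fun s => u t s) r (ur t r) ->
  derivable_pt_lim (fun s => ut t s) r (utr t r) ->
  derivable_pt_lim (fun s => ur t s) r (urr t r) ->
  is_derive (fun z => Bf alpha u ut ur t z) r (Brf alpha u ut ur utr urr t r).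
Proof.
  intros Hr H1 H2 H3. apply is_derive_Reals in H1, H2, H3.
  unfold Bf, wgt. auto_derive.
  - repeat split; try (eexists; eauto); auto.
  - rewrite (is_derive_unique _ _ _ H1), (is_derive_unique _ _ _ H2), (is_derive_unique _ _ _ H3).
    unfold Brf, wgt. field. auto.
Qed.

Lemma c2_pow f x y n : continuity_2d_pt f x y -> continuity_2d_pt (fun a b => f a b ^ n) x y.
Proof.
  intros H. induction n; simpl.
  - apply continuity_2d_pt_const.
  - apply continuity_2d_pt_mult; auto.
Qed.

Lemma c2_sin f x y : continuity_2d_pt f x y -> continuity_2d_pt (fun a b => sin (f a b)) x y.
Proof. intros H. apply (c2_comp1 sin f); auto. apply continuity_sin. Qed.
Lemma c2_cos f x y : continuity_2d_pt f x y -> continuity_2d_pt (fun a b => cos (f a b)) x y.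
Proof. intros H. apply (c2_comp1 cos f); auto. apply continuity_cos. Qed.

Ltac c2step :=
  first [ apply continuity_2d_pt_const
        | apply continuity_2d_pt_id2
        | apply continuity_2d_pt_id1
        | apply continuity_2d_pt_plus
        | apply continuity_2d_pt_minus
        | apply continuity_2d_pt_opp
        | apply continuity_2d_pt_mult
        | apply c2_pow
        | apply c2_sin
        | apply c2_cos
        | apply continuity_2d_pt_inv ].

Definition good (U : R -> R -> Prop) t r := U t r /\ r <> 0.

Lemma good_open U t r : open2 U -> good U t r ->
  exists d, 0 < d /\ forall t' r', Rabs (t' - t) < d -> Rabs (r' - r) < d -> good U t' r'.
Proof.
  intros HU [H1 H2]. destruct (HU t r H1) as [d [Hd Hd']].
  assert (Hr : 0 < Rabs r) by (apply Rabs_pos_lt; auto).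
  exists (Rmin d (Rabs r)). split. apply Rmin_pos; auto.
  intros t' r' Ht Hr'. split.
  - apply Hd'. eapply Rlt_le_trans; [apply Ht| apply Rmin_l]. eapply Rlt_le_trans; [apply Hr'| apply Rmin_l].
  - intro E. subst r'. assert (Rabs (0 - r) < Rabs r) by (eapply Rlt_le_trans; [apply Hr'| apply Rmin_r]).
    rewrite Rminus_0_l, Rabs_Ropp in H. lra.
Qed.

Lemma conts alpha U u ut ur utt utr urr t r :
  open2 U -> Reg U u ut ur utt utr urr -> good U t r ->
  continuity_2d_pt (Af alpha u ut ur) t r /\
  continuity_2d_pt (Atf alpha u ut ur utt utr) t r /\
  continuity_2d_pt (Bf alpha u ut ur) t r /\
  continuity_2d_pt (Brf alpha u ut ur utr urr) t r /\
  continuity_2d_pt u t r /\ continuity_2d_pt ut t r /\ continuity_2d_pt ur t r.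
Proof.
  intros HU [_ [Cu [Cut [Cur [Cutt [Cutr Curr]]]]]] [Htr Hr].
  assert (C1 : continuity_2d_pt u t r) by (apply c2_of_cont with U; auto).
  assert (C2 : continuity_2d_pt ut t r) by (apply c2_of_cont with U; auto).
  assert (C3 : continuity_2d_pt ur t r) by (apply c2_of_cont with U; auto).
  assert (C4 : continuity_2d_pt utt t r) by (apply c2_of_cont with U; auto).
  assert (C5 : continuity_2d_pt utr t r) by (apply c2_of_cont with U; auto).
  assert (C6 : continuity_2d_pt urr t r) by (apply c2_of_cont with U; auto).
  assert (Hr2 : r ^ 2 <> 0) by (apply pow_nonzero; auto).
  assert (Hr3 : r ^ 3 <> 0) by (apply pow_nonzero; auto).
  assert (Hr22 : 2 * r ^ 2 <> 0) by (apply Rmult_integral_contrapositive; split; auto; lra).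
  unfold Af, Atf, Bf, Brf, edens, wgt; unfold Rdiv.
  repeat split; repeat (first [exact C1 | exact C2 | exact C3 | exact C4 | exact C5 | exact C6 | c2step]);
    simpl; auto; lra.
Qed.

Lemma DA_eq alpha U u ut ur utt utr urr t r :
  Reg U u ut ur utt utr urr -> good U t r ->
  is_derive (fun z => Af alpha u ut ur z r) t (Atf alpha u ut ur utt utr t r) /\
  Derive (fun z => Af alpha u ut ur z r) t = Atf alpha u ut ur utt utr t r.
Proof.
  intros [Hp _] [Htr Hr]. destruct (Hp t r Htr) as [H1 [_ [H2 [_ [H3 _]]]]].
  assert (D := A_deriv alpha u ut ur utt utr t r Hr H1 H2 H3).
  split; auto. apply is_derive_unique; auto.
Qed.

Lemma DA_cont alpha U u ut ur utt utr urr t r :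
  open2 U -> Reg U u ut ur utt utr urr -> good U t r ->
  continuity_2d_pt (fun a b => Derive (fun z => Af alpha u ut ur z b) a) t r.
Proof.
  intros HU HR Hg.
  apply continuity_2d_pt_ext_loc with (Atf alpha u ut ur utt utr).
  - destruct (good_open U t r HU Hg) as [d [Hd Hd']].
    exists (mkposreal d Hd). simpl. intros a b Ha Hb. symmetry.
    apply (DA_eq alpha U u ut ur utt utr urr); auto.
  - apply (conts alpha U u ut ur utt utr urr t r HU HR Hg).
Qed.

Lemma cont_pt_r_of_good alpha U u ut ur utt utr urr t r :
  open2 U -> Reg U u ut ur utt utr urr -> good U t r ->
  continuity_pt (fun z => Af alpha u ut ur t z) r /\
  continuity_pt (fun z => Atf alpha u ut ur utt utr t z) r /\
  continuity_pt (fun z => Brf alpha u ut ur utr urr t z) r.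
Proof.
  intros HU HR Hg. destruct (conts alpha U u ut ur utt utr urr t r HU HR Hg) as [C1 [C2 [C3 [C4 _]]]].
  repeat split; apply c2_r; auto.
Qed.

Lemma continuous_of_pt (f : R -> R) x : continuity_pt f x -> continuous f x.
Proof. intros H. apply continuity_pt_filterlim. exact H. Qed.

Lemma exRInt_cont (f : R -> R) a b :
  (forall z, Rmin a b <= z <= Rmax a b -> continuity_pt f z) -> ex_RInt f a b.
Proof.
  intros H. apply (ex_RInt_continuous (V:=R_CompleteNormedModule)). intros z Hz.
  apply continuous_of_pt; auto.
Qed.

Lemma G_deriv alpha U u ut ur utt utr urr y d e :
  open2 U -> Reg U u ut ur utt utr urr -> 0 < d -> 0 < e <= 1 -> 0 <= y ->
  (forall y' r, Rabs (y' - y) < d -> e * y - d <= r <= y + d -> good U y' r) ->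
  is_derive (fun z => RInt (fun r => Af alpha u ut ur z r) (e * z) z) y
    (RInt (fun r => Atf alpha u ut ur utt utr y r) (e * y) y
     - Af alpha u ut ur y (e * y) * e + Af alpha u ut ur y y).
Proof.
  intros HU HR Hd He Hy Hg.
  set (f := fun z r => Af alpha u ut ur z r).
  assert (Hey : e * y <= y) by nra.
  assert (Hd2 : 0 < d / 2) by lra.
  assert (Hg0 : forall r, e * y - d <= r <= y + d -> good U y r).
  { intros r Hr. apply Hg; auto. rewrite Rminus_eq_0, Rabs_R0; lra. }
  assert (Hint : forall y' a b, Rabs (y' - y) < d -> e * y - d <= a <= y + d -> e * y - d <= b <= y + d ->
            ex_RInt (f y') a b).
  { intros y' a b Hy' Ha Hb. apply exRInt_cont. intros z Hz.
    apply (cont_pt_r_of_good alpha U u ut ur utt utr urr); auto. apply Hg; auto.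
    split. eapply Rle_trans; [|apply Hz]. apply Rmin_glb; lra.
    eapply Rle_trans; [apply Hz|]. apply Rmax_lub; lra. }
  assert (HD : is_derive (fun z => RInt (fun r => f z r) (e * z) z) y
     (RInt (fun t => Derive (fun u => f u t) y) (e * y) y + - f y (e * y) * e + f y y * 1)).
  { apply (is_derive_RInt_param_bound_comp f (fun z => e * z) (fun z => z) y e 1).
    - apply locally_of_d. exists d. split; auto. intros y' Hy'. apply Hint; auto; lra.
    - exists (mkposreal _ Hd2). apply locally_of_d. exists d. split; auto. intros y' Hy'. simpl.
      apply Hint; auto; lra.
    - exists (mkposreal _ Hd2). apply locally_of_d. exists d. split; auto. intros y' Hy'. simpl.
      apply Hint; auto; lra.
    - auto_derive; auto; ring.
    - auto_derive; auto.
    - exists (mkposreal _ Hd2). apply locally_of_d. exists d. split; auto. intros y' Hy' r Hr. simpl in Hr.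
      eexists. apply (DA_eq alpha U u ut ur utt utr urr); auto. apply Hg; auto.
      split. eapply Rle_trans; [|apply Hr]. apply Rmin_glb; lra.
      eapply Rle_trans; [apply Hr|]. apply Rmax_lub; lra.
    - intros r Hr. apply (DA_cont alpha U u ut ur utt utr urr); auto. apply Hg0.
      rewrite Rmin_left, Rmax_right in Hr by lra. lra.
    - exists (mkposreal _ Hd2). simpl. intros a b Ha Hb.
      apply (DA_cont alpha U u ut ur utt utr urr); auto. apply Hg.
      lra. apply Rabs_def2 in Hb. lra.
    - exists (mkposreal _ Hd2). simpl. intros a b Ha Hb.
      apply (DA_cont alpha U u ut ur utt utr urr); auto. apply Hg.
      lra. apply Rabs_def2 in Hb. lra.
    - apply (cont_pt_r_of_good alpha U u ut ur utt utr urr); auto. apply Hg0; lra.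
    - apply (cont_pt_r_of_good alpha U u ut ur utt utr urr); auto. apply Hg0; lra. }
  assert (E : RInt (fun t => Derive (fun u => f u t) y) (e * y) y =
              RInt (fun r => Atf alpha u ut ur utt utr y r) (e * y) y).
  { apply RInt_ext. intros x Hx. rewrite Rmin_left, Rmax_right in Hx by lra.
    apply (DA_eq alpha U u ut ur utt utr urr); auto. apply Hg0; lra. }
  rewrite E in HD. unfold f in *.
  replace (RInt (fun r => Atf alpha u ut ur utt utr y r) (e * y) y
     - Af alpha u ut ur y (e * y) * e + Af alpha u ut ur y y) with
    (RInt (fun r => Atf alpha u ut ur utt utr y r) (e * y) y
     + - Af alpha u ut ur y (e * y) * e + Af alpha u ut ur y y * 1) by ring.
  exact HD.
Qed.

Lemma RInt_At alpha U u ut ur utt utr urr y e :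
  open2 U -> Reg U u ut ur utt utr urr -> 0 < e <= 1 -> 0 <= y ->
  (forall r, e * y <= r <= y -> good U y r) ->
  (forall r, e * y < r < y -> skyrme_eq alpha r (u y r) (ut y r) (ur y r) (utt y r) (urr y r)) ->
  RInt (fun r => Atf alpha u ut ur utt utr y r) (e * y) y =
    Bf alpha u ut ur y y - Bf alpha u ut ur y (e * y).
Proof.
  intros HU HR He Hy Hg Hpde.
  assert (Hey : e * y <= y) by nra.
  rewrite (RInt_ext _ (fun r => Brf alpha u ut ur utr urr y r)).
  2: { intros x Hx. rewrite Rmin_left, Rmax_right in Hx by lra.
       apply cons_law. apply (proj2 (Hg x ltac:(lra))). apply Hpde; lra. }
  apply is_RInt_unique.
  apply (is_RInt_derive (V:=R_CompleteNormedModule) (fun r => Bf alpha u ut ur y r)).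
  - intros x Hx. rewrite Rmin_left, Rmax_right in Hx by lra.
    destruct (Hg x Hx) as [Hxu Hx0].
    destruct HR as [Hp _]. destruct (Hp y x Hxu) as [_ [H1 [_ [H2 [_ H3]]]]].
    apply B_deriv; auto.
  - intros x Hx. rewrite Rmin_left, Rmax_right in Hx by lra.
    apply continuous_of_pt. apply (cont_pt_r_of_good alpha U u ut ur utt utr urr); auto.
Qed.

Lemma flux_pos alpha u ut ur y : 0 < y ->
  0 <= Af alpha u ut ur y y + Bf alpha u ut ur y y.
Proof.
  intros Hy. unfold Af, Bf, edens, wgt.
  set (S := sin (u y y)). set (P := ut y y). set (Q := ur y y).
  assert (Hw : 0 <= alpha ^ 2 * S ^ 2 / y ^ 2).
  { unfold Rdiv. apply Rmult_le_pos. apply Rmult_le_pos; apply pow2_ge_0.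
    apply Rlt_le, Rinv_0_lt_compat. apply pow_lt; auto. }
  assert (H2 : 0 <= S ^ 2 / (2 * y ^ 2)).
  { unfold Rdiv. apply Rmult_le_pos. apply pow2_ge_0.
    apply Rlt_le, Rinv_0_lt_compat. apply Rmult_lt_0_compat; [lra|apply pow_lt; auto]. }
  set (W := alpha ^ 2 * S ^ 2 / y ^ 2) in *.
  replace (((1 + W) * (P ^ 2 + Q ^ 2) / 2 + S ^ 2 / (2 * y ^ 2)) * y + (1 + W) * P * Q * y)
    with (y * ((1 + W) * ((P + Q) ^ 2 / 2) + S ^ 2 / (2 * y ^ 2))) by (field; lra).
  apply Rmult_le_pos; [lra|]. apply Rplus_le_le_0_compat; auto.
  apply Rmult_le_pos; [lra|]. apply Rmult_le_pos; [apply pow2_ge_0|lra].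
Qed.

Lemma abs_sin_le x : Rabs (sin x) <= Rabs x.
Proof.
  assert (Hd : forall z, is_derive sin z (cos z)) by (intros; apply is_derive_Reals, derivable_pt_lim_sin).
  assert (Hb : forall z, Rabs (cos z) <= 1) by (intros; apply Rabs_le, COS_bound).
  destruct (Rle_dec 0 x) as [H|H].
  - assert (L : Rabs (sin x - sin 0) <= 1 * (x - 0)) by (apply lip_bound with cos; auto).
    rewrite sin_0, Rminus_0_r, Rminus_0_r, Rmult_1_l in L. rewrite (Rabs_right x) by lra. exact L.
  - assert (L : Rabs (sin 0 - sin x) <= 1 * (0 - x)) by (apply lip_bound with cos; auto; lra).
    rewrite sin_0, Rminus_0_l, Rabs_Ropp, Rmult_1_l in L. rewrite (Rabs_left x) by lra. lra.
Qed.

Lemma A_bound alpha u ut ur t r M : 0 < r -> 0 <= M ->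
  Rabs (u t r) <= M * r -> Rabs (ut t r) <= M -> Rabs (ur t r) <= M ->
  0 <= Af alpha u ut ur t r <= r * ((1 + alpha^2 * M^2) * M^2 + M^2) /\
  Rabs (Bf alpha u ut ur t r) <= r * ((1 + alpha^2 * M^2) * M^2 + M^2).
Proof.
  intros Hr HM Hu Hp Hq.
  assert (HS : Rabs (sin (u t r)) <= M * r) by (eapply Rle_trans; [apply abs_sin_le|auto]).
  unfold Af, Bf, edens, wgt.
  set (S := sin (u t r)) in *. set (P := ut t r) in *. set (Q := ur t r) in *.
  assert (HS2 : S ^ 2 <= M^2 * r^2).
  { rewrite <- (pow2_abs S). replace (M^2 * r^2) with ((M*r)^2) by ring.
    apply pow_incr. split; [apply Rabs_pos|auto]. }
  assert (HP2 : P ^ 2 <= M^2) by (rewrite <- (pow2_abs P); apply pow_incr; split; [apply Rabs_pos|auto]).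
  assert (HQ2 : Q ^ 2 <= M^2) by (rewrite <- (pow2_abs Q); apply pow_incr; split; [apply Rabs_pos|auto]).
  assert (HW : 0 <= S ^ 2 / r ^ 2 <= M ^ 2).
  { split. unfold Rdiv. apply Rmult_le_pos. apply pow2_ge_0.
    apply Rlt_le, Rinv_0_lt_compat. apply pow_lt; auto.
    apply Rmult_le_reg_r with (r^2). apply pow_lt; auto.
    unfold Rdiv. rewrite Rmult_assoc, Rinv_l, Rmult_1_r. lra. apply pow_nonzero; lra. }
  replace (((1 + alpha ^ 2 * S ^ 2 / r ^ 2) * (P ^ 2 + Q ^ 2) / 2 + S ^ 2 / (2 * r ^ 2)) * r)
    with (r * ((1 + alpha ^ 2 * (S ^ 2 / r ^ 2)) * (P ^ 2 + Q ^ 2) / 2 + (S ^ 2 / r ^ 2) / 2)) by (field; lra).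
  replace ((1 + alpha ^ 2 * S ^ 2 / r ^ 2) * P * Q * r)
    with (r * ((1 + alpha ^ 2 * (S ^ 2 / r ^ 2)) * (P * Q))) by (field; lra).
  set (W := S ^ 2 / r ^ 2) in *.
  assert (Ha : 0 <= alpha ^ 2) by apply pow2_ge_0.
  assert (HPQ : Rabs (P * Q) <= M ^ 2).
  { rewrite Rabs_mult. simpl. rewrite Rmult_1_r. apply Rmult_le_compat; auto; apply Rabs_pos. }
  assert (H1 : 0 <= 1 + alpha ^ 2 * W <= 1 + alpha ^ 2 * M ^ 2).
  { split. nra. apply Rplus_le_compat_l. apply Rmult_le_compat_l; lra. }
  split; [split|].
  - apply Rmult_le_pos; [lra|]. assert (0 <= P^2) by apply pow2_ge_0. assert (0 <= Q^2) by apply pow2_ge_0. nra.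
  - apply Rmult_le_compat_l; [lra|].
    assert (0 <= P^2) by apply pow2_ge_0. assert (0 <= Q^2) by apply pow2_ge_0.
    assert (0 <= M^2) by apply pow2_ge_0.
    assert ((1 + alpha ^ 2 * W) * (P ^ 2 + Q ^ 2) <= (1 + alpha ^ 2 * M ^ 2) * (M^2 + M^2)).
    { apply Rmult_le_compat; lra. }
    lra.
  - rewrite Rabs_mult, (Rabs_right r) by lra. apply Rmult_le_compat_l; [lra|].
    rewrite Rabs_mult, (Rabs_right (1 + alpha ^ 2 * W)) by lra.
    assert (0 <= M^2) by apply pow2_ge_0.
    assert ((1 + alpha ^ 2 * W) * Rabs (P * Q) <= (1 + alpha ^ 2 * M ^ 2) * M ^ 2).
    { apply Rmult_le_compat; try lra. apply Rabs_pos. }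
    nra.
Qed.

Definition Hyp alpha T0 (U : R -> R -> Prop) (u ut ur utt utr urr : R -> R -> R) : Prop :=
  open2 U /\ (forall t r, Omega T0 t r -> U t r) /\ Reg U u ut ur utt utr urr /\
  (forall t r, Omega T0 t r -> 0 < r ->
       skyrme_eq alpha r (u t r) (ut t r) (ur t r) (utt t r) (urr t r)) /\
  (forall t, 0 < t <= T0 -> u t 0 = 0).

Lemma u_lip alpha T0 U u ut ur utt utr urr t r M :
  Hyp alpha T0 U u ut ur utt utr urr -> 0 < t <= T0 -> 0 <= r <= t ->
  (forall z, 0 <= z <= r -> Rabs (ur t z) <= M) -> Rabs (u t r) <= M * r.
Proof.
  intros [HU [HO [[Hp _] [_ H0]]]] Ht Hr HM.
  replace (u t r) with (u t r - u t 0) by (rewrite H0; auto; ring).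
  replace (M * r) with (M * (r - 0)) by ring.
  apply lip_bound with (ur t); [lra| |auto].
  intros x Hx. apply is_derive_Reals. apply (Hp t x). apply HO. split; auto; lra.
Qed.

Lemma A_zero alpha u ut ur t : Af alpha u ut ur t 0 = 0.
Proof. unfold Af. ring. Qed.

Lemma A_nonneg alpha u ut ur t r : 0 < r -> 0 <= Af alpha u ut ur t r.
Proof.
  intros Hr. unfold Af, edens, wgt.
  apply Rmult_le_pos; [|lra].
  assert (0 <= alpha ^ 2 * sin (u t r) ^ 2 / r ^ 2).
  { unfold Rdiv. apply Rmult_le_pos. apply Rmult_le_pos; apply pow2_ge_0.
    apply Rlt_le, Rinv_0_lt_compat. apply pow_lt; auto. }
  assert (0 <= sin (u t r) ^ 2 / (2 * r ^ 2)).
  { unfold Rdiv. apply Rmult_le_pos. apply pow2_ge_0.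
    apply Rlt_le, Rinv_0_lt_compat. apply Rmult_lt_0_compat; [lra|apply pow_lt; auto]. }
  assert (0 <= ut t r ^ 2) by apply pow2_ge_0. assert (0 <= ur t r ^ 2) by apply pow2_ge_0.
  apply Rplus_le_le_0_compat; auto. unfold Rdiv. apply Rmult_le_pos; [|lra].
  apply Rmult_le_pos; lra.
Qed.

Lemma local_bound alpha T0 U u ut ur utt utr urr t :
  Hyp alpha T0 U u ut ur utt utr urr -> 0 < t <= T0 ->
  exists d M, 0 < d /\ 0 <= M /\ forall z, 0 <= z < d ->
    Rabs (ut t z) <= M /\ Rabs (ur t z) <= M.
Proof.
  intros HH Ht. destruct HH as [HU [HO [[Hp [Cu [Cut [Cur _]]]] _]]].
  assert (Ht0 : U t 0) by (apply HO; split; lra).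
  destruct (c2_of_cont U ut t 0 HU Cut Ht0 (mkposreal 1 Rlt_0_1)) as [d1 Hd1].
  destruct (c2_of_cont U ur t 0 HU Cur Ht0 (mkposreal 1 Rlt_0_1)) as [d2 Hd2].
  exists (Rmin d1 d2), (Rabs (ut t 0) + Rabs (ur t 0) + 1).
  split. apply Rmin_pos; apply cond_pos. split. pose proof (Rabs_pos (ut t 0)); pose proof (Rabs_pos (ur t 0)); lra.
  intros z Hz.
  assert (Hz1 : Rabs (z - 0) < d1) by (rewrite Rminus_0_r, Rabs_right by lra; eapply Rlt_le_trans; [apply Hz|apply Rmin_l]).
  assert (Hz2 : Rabs (z - 0) < d2) by (rewrite Rminus_0_r, Rabs_right by lra; eapply Rlt_le_trans; [apply Hz|apply Rmin_r]).
  assert (Ht1 : Rabs (t - t) < d1) by (rewrite Rminus_eq_0, Rabs_R0; apply cond_pos).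
  assert (Ht2 : Rabs (t - t) < d2) by (rewrite Rminus_eq_0, Rabs_R0; apply cond_pos).
  specialize (Hd1 t z Ht1 Hz1). specialize (Hd2 t z Ht2 Hz2). simpl in *.
  pose proof (Rabs_triang_inv (ut t z) (ut t 0)). pose proof (Rabs_triang_inv (ur t z) (ur t 0)).
  pose proof (Rabs_pos (ut t 0)); pose proof (Rabs_pos (ur t 0)).
  split; lra.
Qed.

Lemma exRInt_0 (f : R -> R) b : 0 < b ->
  (forall z, 0 < z <= b -> continuity_pt f z) ->
  (forall eps, 0 < eps -> exists d, 0 < d /\ forall z, 0 < z < d -> Rabs (f z - f 0) < eps) ->
  ex_RInt f 0 b.
Proof.
  intros Hb Hc H0.
  apply ex_RInt_ext with (fun z => f (Rmax 0 z)).
  { intros x Hx. rewrite Rmin_left, Rmax_right in Hx by lra. rewrite Rmax_right; lra. }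
  apply exRInt_cont. rewrite Rmin_left, Rmax_right by lra. intros z Hz.
  destruct (Req_dec z 0) as [->|Hz0].
  - intros eps Heps. destruct (H0 eps Heps) as [d [Hd Hd']]. exists d. split; auto.
    intros y [_ Hy]. simpl in *. unfold R_dist in *. rewrite (Rmax_left 0 0) by lra.
    destruct (Rle_dec y 0) as [Hy0|Hy0].
    + rewrite Rmax_left by lra. rewrite Rminus_eq_0, Rabs_R0; lra.
    + rewrite Rmax_right by lra. apply Hd'. rewrite Rminus_0_r in Hy. rewrite Rabs_right in Hy; lra.
  - assert (Hzp : 0 < z) by lra.
    intros eps Heps. destruct (Hc z (conj Hzp (proj2 Hz)) eps Heps) as [d [Hd Hd']].
    exists (Rmin d z). split. apply Rmin_pos; lra.
    intros y [_ Hy]. simpl in *. unfold R_dist in *.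
    assert (Hyz : Rabs (y - z) < z) by (eapply Rlt_le_trans; [apply Hy|apply Rmin_r]).
    apply Rabs_def2 in Hyz.
    rewrite (Rmax_right 0 z), (Rmax_right 0 y) by lra.
    destruct (Req_dec y z) as [->|Hyz'].
    + rewrite Rminus_eq_0, Rabs_R0; lra.
    + apply Hd'. split. split; [exact I|auto]. simpl. unfold R_dist.
      eapply Rlt_le_trans; [apply Hy|apply Rmin_l].
Qed.

Lemma exA alpha T0 U u ut ur utt utr urr t a b :
  Hyp alpha T0 U u ut ur utt utr urr -> 0 < t <= T0 -> 0 <= a <= b -> b <= t ->
  ex_RInt (Af alpha u ut ur t) a b.
Proof.
  intros HH Ht Hab Hbt.
  destruct (Req_dec a b) as [->|Hne]. { apply ex_RInt_point. }
  apply (ex_RInt_Chasles_2 (V:=R_CompleteNormedModule) _ 0). lra.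
  destruct HH as [HU [HO [HR HH']]] eqn:EH.
  apply exRInt_0. lra.
  - intros z Hz. apply (cont_pt_r_of_good alpha U u ut ur utt utr urr); auto.
    split. apply HO. split; lra. lra.
  - destruct (local_bound alpha T0 U u ut ur utt utr urr t HH Ht) as [d [M [Hd [HM HB]]]].
    set (K := (1 + alpha^2 * M^2) * M^2 + M^2).
    assert (HK : 0 <= K) by (unfold K; assert (0 <= alpha^2*M^2) by (apply Rmult_le_pos; apply pow2_ge_0); assert (0 <= M^2) by apply pow2_ge_0; nra).
    intros eps Heps. exists (Rmin (Rmin d t) (eps / (K + 1))). split.
    { repeat apply Rmin_pos; try lra. apply Rdiv_lt_0_compat; lra. }
    intros z Hz. rewrite A_zero, Rminus_0_r.
    assert (Hz1 : z < d) by (eapply Rlt_le_trans; [apply Hz|]; eapply Rle_trans; [apply Rmin_l|apply Rmin_l]).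
    assert (Hz2 : z < t) by (eapply Rlt_le_trans; [apply Hz|]; eapply Rle_trans; [apply Rmin_l|apply Rmin_r]).
    assert (Hz3 : z < eps / (K + 1)) by (eapply Rlt_le_trans; [apply Hz|apply Rmin_r]).
    assert (Hu : Rabs (u t z) <= M * z).
    { apply (u_lip alpha T0 U u ut ur utt utr urr); auto. lra. intros y Hy. apply HB; lra. }
    destruct (A_bound alpha u ut ur t z M ltac:(lra) HM Hu) as [HA _]; try apply HB; try lra.
    rewrite Rabs_right by lra. fold K in HA.
    apply Rle_lt_trans with (z * K). lra.
    apply Rle_lt_trans with (eps / (K+1) * K). apply Rmult_le_compat_r; lra.
    unfold Rdiv. rewrite Rmult_assoc. rewrite <- (Rmult_1_r eps) at 2.
    apply Rmult_lt_compat_l; auto. apply Rmult_lt_reg_r with (K+1); [lra|].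
    rewrite Rmult_assoc, (Rmult_comm K), <- Rmult_assoc, Rinv_l by lra. lra.
Qed.

Lemma abs_le_inv x y : Rabs x <= y -> - y <= x <= y.
Proof. intros H. unfold Rabs in H. destruct (Rcase_abs x); lra. Qed.

Lemma mono alpha T0 U u ut ur utt utr urr t1 :
  Hyp alpha T0 U u ut ur utt utr urr -> 0 < t1 < T0 ->
  RInt (Af alpha u ut ur t1) 0 t1 <= RInt (Af alpha u ut ur T0) 0 T0.
Proof.
  intros HH Ht1.
  pose proof HH as [HU [HO [HR [Hpde H0]]]].
  assert (HK0 : forall t r, t1 <= t <= T0 -> 0 <= r <= t -> U t r).
  { intros t r Ht Hr. apply HO. split; [lra|auto]. }
  destruct (tube U t1 T0 HU ltac:(lra) HK0) as [eta [Heta Htube]].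
  pose proof HR as [Hp [Cu [Cut [Cur _]]]].
  destruct (bounded2d ut t1 T0 0 t1) as [M1 HM1].
  { intros x y Hx Hy. apply c2_of_cont with U; auto. apply HO. split; lra. }
  destruct (bounded2d ur t1 T0 0 t1) as [M2 HM2].
  { intros x y Hx Hy. apply c2_of_cont with U; auto. apply HO. split; lra. }
  set (M := Rabs M1 + Rabs M2).
  assert (HM : 0 <= M) by (unfold M; pose proof (Rabs_pos M1); pose proof (Rabs_pos M2); lra).
  assert (HMt : forall x y, t1 <= x <= T0 -> 0 <= y <= t1 -> Rabs (ut x y) <= M).
  { intros x y Hx Hy. specialize (HM1 x y Hx Hy). unfold M. pose proof (Rle_abs M1); pose proof (Rabs_pos M2); lra. }
  assert (HMr : forall x y, t1 <= x <= T0 -> 0 <= y <= t1 -> Rabs (ur x y) <= M).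
  { intros x y Hx Hy. specialize (HM2 x y Hx Hy). unfold M. pose proof (Rle_abs M2); pose proof (Rabs_pos M1); lra. }
  set (K := (1 + alpha^2 * M^2) * M^2 + M^2).
  assert (HK : 0 <= K) by (unfold K; assert (0 <= alpha^2*M^2) by (apply Rmult_le_pos; apply pow2_ge_0); assert (0 <= M^2) by apply pow2_ge_0; nra).
  assert (Bnd : forall s r, t1 <= s <= T0 -> 0 < r <= t1 ->
            0 <= Af alpha u ut ur s r <= r * K /\ Rabs (Bf alpha u ut ur s r) <= r * K).
  { intros s r Hs Hr.
    assert (Hu : Rabs (u s r) <= M * r).
    { apply (u_lip alpha T0 U u ut ur utt utr urr); auto; try lra. intros z Hz. apply HMr; lra. }
    apply A_bound; auto. lra. apply HMt; lra. apply HMr; lra. }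
  set (E := fun y => RInt (Af alpha u ut ur y) 0 y).
  set (C := 2 * T0 * K * (T0 - t1) + 2 * T0 * T0 * K).
  assert (HC : 0 <= C) by (unfold C; assert (0 <= T0 * K) by (apply Rmult_le_pos; lra); nra).
  assert (Main : forall e, 0 < e <= t1 / T0 -> E T0 - E t1 >= - e * C).
  { intros e He.
    assert (HeT : e * T0 <= t1).
    { apply Rmult_le_reg_r with (/ T0). apply Rinv_0_lt_compat; lra.
      rewrite Rmult_assoc, Rinv_r, Rmult_1_r by lra. exact (proj2 He). }
    assert (He1 : e <= 1).
    { apply Rmult_le_reg_r with T0; lra. }
    set (G := fun y => RInt (fun r => Af alpha u ut ur y r) (e * y) y).
    set (D := fun y => RInt (fun r => Atf alpha u ut ur utt utr y r) (e * y) y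
              - Af alpha u ut ur y (e * y) * e + Af alpha u ut ur y y).
    set (d := Rmin eta (e * t1) / 2).
    assert (Hd : 0 < d) by (unfold d; assert (0 < Rmin eta (e * t1)) by (apply Rmin_pos; nra); lra).
    assert (Hreg : forall y, t1 <= y <= T0 -> forall y' r, Rabs (y' - y) < d -> e * y - d <= r <= y + d -> good U y' r).
    { intros y Hy y' r Hy' Hr.
      assert (Hd1 : d < eta) by (unfold d; pose proof (Rmin_l eta (e * t1)); lra).
      assert (Hd2 : d <= e * t1 / 2) by (unfold d; pose proof (Rmin_r eta (e * t1)); lra).
      assert (Hr0 : 0 < r) by nra.
      split; [|lra].
      destruct (Rle_dec r y) as [Hry|Hry].
      - apply (Htube y r); auto; try lra. rewrite Rminus_eq_0, Rabs_R0; lra.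
      - apply (Htube y y); auto; try lra. apply Rabs_def1; lra. }
    assert (Gd : forall y, t1 <= y <= T0 -> is_derive G y (D y)).
    { intros y Hy. apply (G_deriv alpha U u ut ur utt utr urr y d e); auto; try lra. apply Hreg; auto. }
    destruct (MVT_gen G t1 T0 D) as [c [Hc Hmvt]].
    { intros x Hx. rewrite Rmin_left, Rmax_right in Hx by lra. apply Gd. lra. }
    { intros x Hx. rewrite Rmin_left, Rmax_right in Hx by lra.
      apply continuity_pt_filterlim. apply (ex_derive_continuous (K:=R_AbsRing) (V:=R_NormedModule)).
      eexists; apply Gd; auto. }
    rewrite Rmin_left, Rmax_right in Hc by lra.
    assert (HDc : D c >= - (2 * e * T0 * K)).
    { unfold D. rewrite (RInt_At alpha U u ut ur utt utr urr c e); auto; try lra.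
      - pose proof (flux_pos alpha u ut ur c ltac:(lra)).
        assert (Hec : 0 < e * c <= t1) by (split; nra).
        destruct (Bnd c (e * c) ltac:(lra) Hec) as [HA HB].
        apply abs_le_inv in HB.
        assert (e * c * K <= e * T0 * K) by (apply Rmult_le_compat_r; auto; nra).
        assert (Af alpha u ut ur c (e * c) * e <= e * T0 * K).
        { apply Rle_trans with (e * c * K * e). apply Rmult_le_compat_r; lra.
          replace (e * c * K * e) with (e * c * K * e) by ring.
          assert (0 <= e * c * K) by (apply Rmult_le_pos; nra). nra. }
        lra.
      - intros r Hr. apply (Hreg c); try lra. rewrite Rminus_eq_0, Rabs_R0; lra.
      - intros r Hr. apply Hpde. split; [lra|]. split; nra. nra. }
    assert (HGdiff : G T0 - G t1 >= - (2 * e * T0 * K) * (T0 - t1)).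
    { rewrite Hmvt. apply Rle_ge. apply Rmult_le_compat_r; lra. }
    assert (Split : forall y, t1 <= y <= T0 -> E y = RInt (Af alpha u ut ur y) 0 (e * y) + G y
                     /\ Rabs (RInt (Af alpha u ut ur y) 0 (e * y)) <= e * T0 * (T0 * K)).
    { intros y Hy. split.
      - unfold E, G. symmetry.
        apply (RInt_Chasles (V:=R_CompleteNormedModule) (Af alpha u ut ur y) 0 (e * y) y).
        apply (exA alpha T0 U u ut ur utt utr urr); auto; nra.
        apply (exA alpha T0 U u ut ur utt utr urr); auto; nra.
      - eapply Rle_trans.
        apply abs_RInt_le_const with (M := e * y * K). nra.
        apply (exA alpha T0 U u ut ur utt utr urr); auto; nra.
        intros z Hz. destruct (Req_dec z 0) as [->|Hz0].
        + rewrite A_zero, Rabs_R0. apply Rmult_le_pos; nra.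
        + destruct (Bnd y z ltac:(lra) ltac:(nra)) as [HA _]. rewrite Rabs_right by lra.
          assert (z * K <= e * y * K) by (apply Rmult_le_compat_r; lra). lra.
        + rewrite Rminus_0_r.
          assert (0 <= e * y) by nra.
          assert (e * y * K <= T0 * K) by (apply Rmult_le_compat_r; nra).
          assert (e * y <= e * T0) by nra.
          apply Rmult_le_compat; nra. }
    destruct (Split T0 ltac:(lra)) as [S1 B1]. destruct (Split t1 ltac:(lra)) as [S2 B2].
    rewrite S1, S2. apply abs_le_inv in B1. apply abs_le_inv in B2.
    unfold C. nra. }
  fold (E t1) (E T0).
  apply Rnot_lt_le. intro Hlt.
  set (delta := E t1 - E T0).
  assert (Hdl : 0 < delta) by (unfold delta; lra).
  set (e := Rmin (t1 / T0) (delta / (2 * (C + 1)))).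
  assert (He : 0 < e <= t1 / T0).
  { split. apply Rmin_pos. apply Rdiv_lt_0_compat; lra. apply Rdiv_lt_0_compat; lra. apply Rmin_l. }
  specialize (Main e He).
  assert (He2 : e <= delta / (2 * (C + 1))) by apply Rmin_r.
  assert (e * (C + 1) <= delta / 2).
  { apply Rle_trans with (delta / (2 * (C + 1)) * (C + 1)). apply Rmult_le_compat_r; lra.
    right. field. lra. }
  assert (0 <= e * C) by (apply Rmult_le_pos; lra).
  unfold delta in *. nra.
Qed.

Lemma alg1 a S P Q rho r : 0 < a -> 0 < rho <= r ->
  S * Q <= r * (((1 + a^2 * S^2 / rho^2) * (P^2 + Q^2) / 2 + S^2 / (2 * rho^2)) * rho) + 1 / (2 * a^2).
Proof.
  intros Ha Hr.
  assert (Ha2 : 0 < a^2) by (apply pow_lt; auto).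
  set (X := a^2 * S^2 * Q^2 / (2 * rho)).
  assert (H1 : X <= ((1 + a^2 * S^2 / rho^2) * (P^2 + Q^2) / 2 + S^2 / (2 * rho^2)) * rho).
  { replace (((1 + a^2 * S^2 / rho^2) * (P^2 + Q^2) / 2 + S^2 / (2 * rho^2)) * rho)
      with (X + (rho * (P^2 + Q^2) / 2 + a^2 * S^2 * P^2 / (2 * rho) + S^2 / (2 * rho)))
      by (unfold X; field; lra).
    assert (0 <= rho * (P^2 + Q^2) / 2).
    { assert (0 <= P^2) by apply pow2_ge_0. assert (0 <= Q^2) by apply pow2_ge_0.
      unfold Rdiv. apply Rmult_le_pos; [apply Rmult_le_pos|]; lra. }
    assert (0 <= a^2 * S^2 * P^2 / (2 * rho)).
    { unfold Rdiv. apply Rmult_le_pos. apply Rmult_le_pos; [apply Rmult_le_pos|]; try lra; apply pow2_ge_0.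
      apply Rlt_le, Rinv_0_lt_compat; lra. }
    assert (0 <= S^2 / (2 * rho)).
    { unfold Rdiv. apply Rmult_le_pos. apply pow2_ge_0. apply Rlt_le, Rinv_0_lt_compat; lra. }
    lra. }
  assert (H2 : S * Q <= r * X + rho / (2 * a^2 * r)).
  { assert (E : r * X + rho / (2 * a^2 * r) - S * Q = (r * a^2 * S * Q - rho)^2 / (2 * a^2 * r * rho))
      by (unfold X; field; lra).
    assert (0 <= (r * a^2 * S * Q - rho)^2 / (2 * a^2 * r * rho)).
    { unfold Rdiv. apply Rmult_le_pos. apply pow2_ge_0. apply Rlt_le, Rinv_0_lt_compat.
      repeat apply Rmult_lt_0_compat; lra. }
    lra. }
  assert (H3 : rho / (2 * a^2 * r) <= 1 / (2 * a^2)).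
  { replace (rho / (2 * a^2 * r)) with ((rho / r) * (1 / (2 * a^2))) by (field; lra).
    assert (rho / r <= 1).
    { apply Rmult_le_reg_r with r; [lra|]. unfold Rdiv. rewrite Rmult_assoc, Rinv_l; lra. }
    assert (0 < 1 / (2 * a^2)) by (apply Rdiv_lt_0_compat; lra).
    nra. }
  assert (r * X <= r * (((1 + a^2 * S^2 / rho^2) * (P^2 + Q^2) / 2 + S^2 / (2 * rho^2)) * rho))
    by (apply Rmult_le_compat_l; lra).
  lra.
Qed.

Lemma holder alpha T0 U u ut ur utt utr urr t r :
  Hyp alpha T0 U u ut ur utt utr urr -> 0 < alpha -> 0 < t <= T0 -> 0 <= r <= t ->
  1 - cos (u t r) <= r * (RInt (Af alpha u ut ur t) 0 t + 1 / (2 * alpha ^ 2)).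
Proof.
  intros HH Ha Ht Hr.
  pose proof HH as [HU [HO [HR [Hpde H0]]]].
  pose proof HR as [Hp [Cu [Cut [Cur _]]]].
  destruct (Req_dec r 0) as [->|Hr0].
  { rewrite H0, cos_0 by auto. lra. }
  assert (Hrp : 0 < r) by lra.
  set (h := fun z => sin (u t z) * ur t z).
  assert (Hc : forall z, 0 <= z <= r -> continuity_pt h z).
  { intros z Hz. apply (c2_r (fun a b => sin (u a b) * ur a b)).
    apply continuity_2d_pt_mult. apply c2_sin. apply c2_of_cont with U; auto. apply HO; split; lra.
    apply c2_of_cont with U; auto. apply HO; split; lra. }
  assert (I1 : is_RInt h 0 r (minus (- cos (u t r)) (- cos (u t 0)))).
  { apply (is_RInt_derive (V:=R_CompleteNormedModule) (fun z => - cos (u t z))).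
    - intros x Hx. rewrite Rmin_left, Rmax_right in Hx by lra.
      assert (D : is_derive (fun z => u t z) x (ur t x)).
      { apply is_derive_Reals. apply (Hp t x). apply HO. split; lra. }
      auto_derive. eexists; eauto.
      rewrite (is_derive_unique (fun x0 : R => u t x0) x (ur t x) D). unfold h. ring.
    - intros x Hx. rewrite Rmin_left, Rmax_right in Hx by lra. apply continuous_of_pt. auto. }
  rewrite H0, cos_0 in I1 by auto.
  assert (E1 : 1 - cos (u t r) = RInt h 0 r).
  { symmetry. rewrite (is_RInt_unique _ _ _ _ I1). unfold minus, plus, opp. simpl. ring. }
  assert (ExA : ex_RInt (Af alpha u ut ur t) 0 r) by (apply (exA alpha T0 U u ut ur utt utr urr); auto; lra).
  set (g := fun z => r * Af alpha u ut ur t z + 1 / (2 * alpha ^ 2)).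
  assert (I2 : is_RInt g 0 r (r * RInt (Af alpha u ut ur t) 0 r + r * (1 / (2 * alpha ^ 2)))).
  { apply (is_RInt_ext (fun z => plus (scal r (Af alpha u ut ur t z)) (1 / (2 * alpha ^ 2)))).
    { intros x _. unfold g, plus, scal. simpl. unfold mult. simpl. ring. }
    replace (r * RInt (Af alpha u ut ur t) 0 r + r * (1 / (2 * alpha ^ 2)))
      with (plus (scal r (RInt (Af alpha u ut ur t) 0 r)) (scal (r - 0) (1 / (2 * alpha ^ 2)))).
    2: { unfold plus, scal. simpl. unfold mult. simpl. ring. }
    apply (is_RInt_plus (V:=R_NormedModule)).
    apply (is_RInt_scal (V:=R_NormedModule)). apply (RInt_correct (V:=R_CompleteNormedModule)). exact ExA.
    apply (is_RInt_const (V:=R_NormedModule)). }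
  assert (L1 : RInt h 0 r <= RInt g 0 r).
  { apply RInt_le. lra. apply exRInt_cont. rewrite Rmin_left, Rmax_right by lra. auto.
    eexists; exact I2.
    intros x Hx. unfold h, g, Af, edens, wgt. apply alg1; auto; lra. }
  rewrite (is_RInt_unique _ _ _ _ I2) in L1.
  assert (L2 : RInt (Af alpha u ut ur t) 0 r <= RInt (Af alpha u ut ur t) 0 t).
  { rewrite <- (RInt_Chasles (V:=R_CompleteNormedModule) (Af alpha u ut ur t) 0 r t); auto.
    2: { apply (exA alpha T0 U u ut ur utt utr urr); auto; lra. }
    assert (0 <= RInt (Af alpha u ut ur t) r t).
    { apply RInt_ge_0. lra. apply (exA alpha T0 U u ut ur utt utr urr); auto; lra.
      intros x Hx. apply A_nonneg. lra. }
    unfold plus. simpl. lra. }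
  assert (r * RInt (Af alpha u ut ur t) 0 r <= r * RInt (Af alpha u ut ur t) 0 t)
    by (apply Rmult_le_compat_l; lra).
  lra.
Qed.
Lemma cos_le x : -1 <= x <= 1 -> cos x <= 1 - x^2/4.
Proof.
intros Hx. pose proof PI2_1 as Hpi.
destruct (cos_bound x 0) as [_ Hc]. lra. lra.
unfold cos_approx, cos_term in Hc. simpl in Hc.
assert (Hc' : cos x <= 1 - x^2/2 + x^4/24) by (eapply Rle_trans; [exact Hc| right; field]).
assert (H0 : 0 <= x^2) by apply pow2_ge_0.
assert (H1 : x^2 <= 1) by (replace (x^2) with (x*x) by ring; nra).
assert (H2 : x^4 <= x^2).
{ replace (x^4) with (x^2*x^2) by ring. rewrite <- (Rmult_1_r (x^2)) at 3. apply Rmult_le_compat_l; lra. }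
lra.
Qed.

Lemma clamp_lip a b x y : a <= b -> Rabs (Rmax a (Rmin b x) - Rmax a (Rmin b y)) <= Rabs (x - y).
Proof.
  intros Hab. unfold Rmax, Rmin.
  repeat (destruct (Rle_dec _ _)); unfold Rabs; repeat (destruct (Rcase_abs _)); lra.
Qed.

Lemma clamp_in a b x : a <= b -> a <= Rmax a (Rmin b x) <= b.
Proof. intros Hab. unfold Rmax, Rmin. repeat (destruct (Rle_dec _ _)); lra. Qed.

Lemma cont_clamp (g : R -> R) a b : a <= b ->
  (forall c, a <= c <= b -> continuity_pt g c) ->
  continuity (fun z => g (Rmax a (Rmin b z))).
Proof.
  intros Hab Hg z eps Heps.
  destruct (Hg _ (clamp_in a b z Hab) eps Heps) as [d [Hd Hd']].
  exists d. split; auto. intros y [_ Hy]. simpl in *. unfold R_dist in *.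
  destruct (Req_dec (Rmax a (Rmin b y)) (Rmax a (Rmin b z))) as [E|E].
  - rewrite E, Rminus_eq_0, Rabs_R0; auto.
  - apply Hd'. split. split; [exact I|auto]. simpl. unfold R_dist.
    eapply Rle_lt_trans; [apply clamp_lip; auto| exact Hy].
Qed.

Lemma energy_eq alpha T0 U u ut ur utt utr urr :
  Hyp alpha T0 U u ut ur utt utr urr -> 0 < T0 ->
  energy alpha u ut ur T0 = RInt (Af alpha u ut ur T0) 0 T0.
Proof.
  intros HH HT.
  assert (Ex : ex_RInt (Af alpha u ut ur T0) 0 T0) by (apply (exA alpha T0 U u ut ur utt utr urr); auto; lra).
  unfold energy.
  destruct (epsilon_spec (inhabits 0) (fun E => exists pr : Riemann_integrable
                 (fun r => edens alpha u ut ur T0 r * r) 0 T0, RiemannInt pr = E)) as [pr Hpr].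
  { exists (RInt (Af alpha u ut ur T0) 0 T0). exists (ex_RInt_Reals_0 _ _ _ Ex).
    symmetry. apply RInt_Reals. }
  rewrite <- Hpr. symmetry. apply (RInt_Reals (fun r => edens alpha u ut ur T0 r * r)).
Qed.

Lemma main_bound alpha T0 U u ut ur utt utr urr :
  Hyp alpha T0 U u ut ur utt utr urr -> 0 < alpha -> 0 < T0 ->
  let K := Rabs (RInt (Af alpha u ut ur T0) 0 T0) + 1 / (2 * alpha ^ 2) + 1 in
  exists ts, 0 < ts <= T0 /\
    forall t r, Omega T0 t r -> t <= ts -> Rabs (u t r) <= 2 * sqrt K * sqrt r.
Proof.
  intros HH Ha HT K.
  pose proof HH as [HU [HO [HR [Hpde H0]]]].
  pose proof HR as [Hp [Cu _]].
  assert (Ha2 : 0 < 1 / (2 * alpha ^ 2)) by (apply Rdiv_lt_0_compat; [lra| pose proof (pow_lt alpha 2 Ha); lra]).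
  assert (HK : 1 <= K) by (unfold K; pose proof (Rabs_pos (RInt (Af alpha u ut ur T0) 0 T0)); lra).
  assert (HB : forall t r, Omega T0 t r -> 1 - cos (u t r) <= r * K).
  { intros t r [Ht Hr].
    pose proof (holder alpha T0 U u ut ur utt utr urr t r HH Ha Ht Hr) as Hh.
    assert (RInt (Af alpha u ut ur t) 0 t <= RInt (Af alpha u ut ur T0) 0 T0).
    { destruct (Req_dec t T0) as [->|Hne]. lra.
      apply (mono alpha T0 U u ut ur utt utr urr); auto. lra. }
    pose proof (Rle_abs (RInt (Af alpha u ut ur T0) 0 T0)).
    eapply Rle_trans; [exact Hh|]. apply Rmult_le_compat_l; [lra|]. unfold K. lra. }
  exists (Rmin T0 (1 / (8 * K))).
  assert (Hts : 0 < 1 / (8 * K)) by (apply Rdiv_lt_0_compat; lra).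
  split. split. apply Rmin_pos; lra. apply Rmin_l.
  intros t r [Ht Hr] Hts'.
  assert (HtK : t * K <= 1/8).
  { assert (t <= 1 / (8 * K)) by (eapply Rle_trans; [exact Hts'|apply Rmin_r]).
    apply Rle_trans with (1 / (8 * K) * K). apply Rmult_le_compat_r; lra.
    right. field. lra. }
  assert (Hsmall : Rabs (u t r) < 1).
  { apply Rnot_le_lt. intro Hge.
    set (f := fun z => Rabs (u t (Rmax 0 (Rmin r z)))).
    assert (Hfc : continuity f).
    { unfold f. apply (cont_clamp (fun z => Rabs (u t z))). lra.
      intros c Hc. apply (continuity_pt_comp (fun z => u t z) Rabs). apply (c2_r u). apply c2_of_cont with U; auto.
      apply HO. split; lra. apply Rcontinuity_abs. }
    assert (Hf0 : f 0 = 0).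
    { unfold f. rewrite (Rmin_right r 0) by lra. rewrite Rmax_left by lra. rewrite H0 by lra. apply Rabs_R0. }
    assert (Hfr : f r = Rabs (u t r)).
    { unfold f. rewrite Rmin_left by lra. rewrite Rmax_right by lra. auto. }
    destruct (IVT_gen f 0 r 1 Hfc) as [x [Hx Hfx]].
    { rewrite Hf0, Hfr. rewrite Rmin_left, Rmax_right by (pose proof (Rabs_pos (u t r)); lra). lra. }
    rewrite Rmin_left, Rmax_right in Hx by lra.
    unfold f in Hfx. rewrite Rmin_right, Rmax_right in Hfx by lra.
    assert (Hc1 : cos (u t x) <= 3/4).
    { unfold Rabs in Hfx. destruct (Rcase_abs (u t x)).
      - replace (u t x) with (Ropp 1) by lra. rewrite cos_neg. pose proof (cos_le 1 ltac:(lra)). lra.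
      - replace (u t x) with 1 by lra. pose proof (cos_le 1 ltac:(lra)). lra. }
    assert (HBx : 1 - cos (u t x) <= x * K) by (apply HB; split; [auto|lra]).
    assert (x * K <= t * K) by (apply Rmult_le_compat_r; lra).
    lra. }
  assert (Hc : cos (u t r) <= 1 - u t r ^ 2 / 4).
  { apply cos_le. apply Rabs_def2 in Hsmall. lra. }
  assert (Hu2 : u t r ^ 2 <= 4 * (r * K)).
  { pose proof (HB t r (conj Ht Hr)). lra. }
  rewrite <- (sqrt_pow2 (Rabs (u t r))) by apply Rabs_pos.
  rewrite pow2_abs.
  replace (2 * sqrt K * sqrt r) with (sqrt (4 * (r * K))).
  - apply sqrt_le_1_alt. exact Hu2.
  - rewrite sqrt_mult by (try lra; apply Rmult_le_pos; lra). rewrite sqrt_mult by lra.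
    replace 4 with (2 ^ 2) by ring. rewrite sqrt_pow2 by lra. ring.
Qed.

Theorem proposition3 :
  forall alpha : R, 0 < alpha ->
  exists Cf : R -> R,
  forall (T0 : R), 0 < T0 ->
  forall (u ut ur utt urr : R -> R -> R) (U : R -> R -> Prop),
    open2 U ->
    (forall t r, Omega T0 t r -> U t r) ->
    Cinf U u ->
    (forall t r, U t r ->
       partial_t u ut t r /\ partial_r u ur t r /\
       partial_t ut utt t r /\ partial_r ur urr t r) ->
    (forall t r, Omega T0 t r -> 0 < r ->
       skyrme_eq alpha r (u t r) (ut t r) (ur t r) (utt t r) (urr t r)) ->
    (forall t, 0 < t <= T0 -> u t 0 = 0) ->
    (forall eps, 0 < eps -> exists d, 0 < d /\
       forall t r, Omega T0 t r -> sqrt (t ^ 2 + r ^ 2) < d -> Rabs (u t r) < eps)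
    /\
    (exists ts, 0 < ts <= T0 /\
       forall t r, Omega T0 t r -> t <= ts ->
         Rabs (u t r) <= Cf (energy alpha u ut ur T0) * sqrt r).
Proof.
  intros alpha Ha.
  exists (fun E => 2 * sqrt (Rabs E + 1 / (2 * alpha ^ 2) + 1)).
  intros T0 HT u ut ur utt urr U HU HO Hinf Hd Hpde H0.
  destruct (reg_of U u ut ur utt urr HU Hinf Hd) as [utr HR].
  assert (HH : Hyp alpha T0 U u ut ur utt utr urr) by exact (conj HU (conj HO (conj HR (conj Hpde H0)))).
  rewrite (energy_eq alpha T0 U u ut ur utt utr urr HH HT).
  destruct (main_bound alpha T0 U u ut ur utt utr urr HH Ha HT) as [ts [Hts Hb]].
  set (K := Rabs (RInt (Af alpha u ut ur T0) 0 T0) + 1 / (2 * alpha ^ 2) + 1) in *.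
  assert (HC : 0 <= 2 * sqrt K) by (pose proof (sqrt_pos K); lra).
  set (C := 2 * sqrt K) in *.
  split.
  - intros eps Heps.
    assert (He : 0 < eps / (C + 1)) by (apply Rdiv_lt_0_compat; lra).
    exists (Rmin ts ((eps / (C + 1)) ^ 2)). split.
    { apply Rmin_pos. lra. apply pow_lt. lra. }
    intros t r [Ht Hr] Hlt.
    assert (Htd : t <= sqrt (t ^ 2 + r ^ 2)).
    { rewrite <- (sqrt_pow2 t) at 1 by lra. apply sqrt_le_1_alt.
      pose proof (pow2_ge_0 r). lra. }
    assert (Hts' : t <= ts) by (pose proof (Rmin_l ts ((eps / (C + 1)) ^ 2)); lra).
    assert (Hr2 : r <= (eps / (C + 1)) ^ 2) by (pose proof (Rmin_r ts ((eps / (C + 1)) ^ 2)); lra).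
    assert (Hsr : sqrt r <= eps / (C + 1)).
    { rewrite <- (sqrt_pow2 (eps / (C + 1))) by lra. apply sqrt_le_1_alt. exact Hr2. }
    eapply Rle_lt_trans. apply (Hb t r (conj Ht Hr) Hts').
    apply Rle_lt_trans with (C * (eps / (C + 1))).
    apply Rmult_le_compat_l; auto.
    replace (C * (eps / (C + 1))) with (eps * (C / (C + 1))) by (field; lra).
    rewrite <- (Rmult_1_r eps) at 2. apply Rmult_lt_compat_l; auto.
    apply Rmult_lt_reg_r with (C + 1). lra. unfold Rdiv. rewrite Rmult_assoc, Rinv_l; lra.
  - exists ts. split; [exact Hts|]. intros t r HO' Hts'. cbv beta. apply Hb; auto.
Qed.
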